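(* There is an absolute constant $c_0>0$ such that if $\kappa\le c_0$ and $\sqrt\Gamma\le c_0\kappa$ then the following holds. Let $\mathbb K=\{0,1\}^3$ and let $\boldsymbol\theta=(\theta_{\boldsymbol r})_{\boldsymbol r\in\mathbb K}$ be angles such that $|S^{(\alpha)}_{\boldsymbol r}-S^{(\alpha)}_{\boldsymbol r+\hat{\mathrm e}_\alpha}|<\Gamma$ for every nearest-neighbour pair $\boldsymbol r,\boldsymbol r+\hat{\mathrm e}_\alpha$ in $\mathbb K$, but such that it is not the case that all spins are within angle $\kappa$ of one single $\hat{\mathrm w}_\tau$. Let $\boldsymbol r\in\mathbb K$. Then exactly one of the following holds: (1) $|\theta_{\boldsymbol r'}-\theta_{\boldsymbol r}|<4\Gamma/\kappa$ for all $\boldsymbol r'\in\mathbb K$; (2) there exists $\alpha\in\{1,2,3\}$ such that $|\theta_{\boldsymbol r'}-\theta_{\boldsymbol r}|<4\Gamma/\kappa$ for all $\boldsymbol r'\in\mathbb K$ with $\boldsymbol r-\boldsymbol r'\perp\hat{\mathrm e}_\alpha$, while for the remaining $\boldsymbol r'\in\mathbb K$, $|\theta_{\boldsymbol r'}-\tilde\theta_{\boldsymbol r}|<4\Gamma/\kappa$, where $\tilde\theta_{\boldsymbol r}=2\phi_\alpha-\theta_{\boldsymbol r}$ is the reflection of $\theta_{\boldsymbol r}$ through the $\alpha$-th of $\hat{\mathrm a},\hat{\mathrm b},\hat{\mathrm c}$. (Angular differences mod $2\pi$.)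
   Context: $\boldsymbol S_{\boldsymbol r}=(\cos\theta_{\boldsymbol r},\sin\theta_{\boldsymbol r})$; $\hat{\mathrm a},\hat{\mathrm b},\hat{\mathrm c}$ are unit vectors at angles $\phi_1=0,\phi_2=\tfrac{2\pi}3,\phi_3=-\tfrac{2\pi}3$, $S^{(\alpha)}_{\boldsymbol r}=\cos(\theta_{\boldsymbol r}-\phi_\alpha)$; $\hat{\mathrm w}_\tau=(\cos\frac{\pi\tau}3,\sin\frac{\pi\tau}3)$, $\tau=1,\dots,6$. *)

(* Defs.v *)
From Stdlib Require Import Reals ZArith.
Open Scope R_scope.

Definition site : Type := (bool * bool * bool)%type.

Inductive dir : Type := A1 | A2 | A3.

(* alpha-th coordinate of a site (false = 0, true = 1). *)
Definition coord (a : dir) (r : site) : bool :=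
  match a, r with
  | A1, (x, _, _) => x
  | A2, (_, y, _) => y
  | A3, (_, _, z) => z
  end.

(* r + e_alpha (used only when coord a r = false), i.e. flip the alpha-th bit. *)
Definition flip (a : dir) (r : site) : site :=
  match a, r with
  | A1, (x, y, z) => (negb x, y, z)
  | A2, (x, y, z) => (x, negb y, z)
  | A3, (x, y, z) => (x, y, negb z)
  end.

(* phi_1 = 0, phi_2 = 2pi/3, phi_3 = -2pi/3 : angles of a, b, c. *)
Definition phi (a : dir) : R :=
  match a with
  | A1 => 0
  | A2 => 2 * PI / 3
  | A3 => - (2 * PI / 3)
  end.

(* S^(alpha) for a spin at angle th: cos(th - phi_alpha). *)
Definition Scomp (a : dir) (th : R) : R := cos (th - phi a).

(* Angle of w_tau = (cos(pi tau/3), sin(pi tau/3)). *)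
Definition w_angle (tau : nat) : R := PI * INR tau / 3.

Definition ang_close (x y e : R) : Prop :=
  exists k : Z, Rabs (x - y - 2 * PI * IZR k) < e.

(* Main.v *)
Require Import Defs.
From Stdlib Require Import Reals Lra Lia Psatz ZArith List Bool.
Import ListNotations.
Open Scope R_scope.

Lemma sin_lb_cube a : 0 <= a -> a <= 2 -> a <= PI -> a * (1 - a*a/6) <= sin a.
Proof.
  intros H0 H1 H2. destruct (SIN a H0 H2) as [H _].
  eapply Rle_trans; [|exact H].
  unfold sin_lb, sin_approx, sin_term. cbn [sum_f_R0].
  replace (INR (fact (2*0+1))) with 1 by (simpl; ring).
  replace (INR (fact (2*1+1))) with 6 by (simpl; ring).
  replace (INR (fact (2*2+1))) with 120 by (simpl; ring).
  replace (INR (fact (2*3+1))) with 5040 by (simpl; ring).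
  simpl.
  assert (0 <= a^5 * (42 - a*a)) by (apply Rmult_le_pos; [apply pow_le; lra| nra]).
  simpl in H3. nra.
Qed.

Lemma abs_sin_le_pos x : 0 <= x -> Rabs (sin x) <= x.
Proof.
  intro H0. pose proof (SIN_bound x). pose proof PI2_3_2.
  destruct (Req_dec x 0). subst. rewrite sin_0, Rabs_R0; lra.
  pose proof (sin_lt_x x ltac:(lra)).
  destruct (Rle_lt_dec x PI).
  - pose proof (sin_ge_0 x H0 r). rewrite Rabs_right; lra.
  - unfold Rabs; destruct Rcase_abs; lra.
Qed.

Lemma abs_sin_le x : Rabs (sin x) <= Rabs x.
Proof.
  destruct (Rle_lt_dec 0 x).
  - rewrite (Rabs_right x) by lra. apply abs_sin_le_pos; lra.
  - rewrite (Rabs_left x) by lra. rewrite <- Rabs_Ropp, <- sin_neg. apply abs_sin_le_pos; lra.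
Qed.

Lemma abs_sin_shift_nat (n : nat) x : Rabs (sin (x + INR n * PI)) = Rabs (sin x).
Proof.
  induction n as [|n IH].
  - simpl. rewrite Rmult_0_l, Rplus_0_r. reflexivity.
  - rewrite S_INR. replace (x + (INR n + 1) * PI) with ((x + INR n * PI) + PI) by ring.
    rewrite neg_sin, Rabs_Ropp. exact IH.
Qed.

Lemma abs_sin_shift (k : Z) x : Rabs (sin (x + IZR k * PI)) = Rabs (sin x).
Proof.
  destruct k as [|p|p].
  - simpl. rewrite Rmult_0_l, Rplus_0_r. reflexivity.
  - rewrite <- positive_nat_Z, <- INR_IZR_INZ. apply abs_sin_shift_nat.
  - rewrite <- (abs_sin_shift_nat (Pos.to_nat p) (x + IZR (Z.neg p) * PI)).
    f_equal. f_equal. rewrite INR_IZR_INZ, positive_nat_Z.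
    replace (IZR (Z.neg p)) with (- IZR (Z.pos p)) by (rewrite <- opp_IZR; reflexivity). ring.
Qed.

Lemma sin_lip x y : Rabs (sin x - sin y) <= Rabs (x - y).
Proof.
  rewrite form4. rewrite !Rabs_mult.
  pose proof (abs_sin_le ((x - y)/2)). pose proof (COS_bound ((x+y)/2)).
  assert (Rabs (cos ((x+y)/2)) <= 1) by (unfold Rabs; destruct Rcase_abs; lra).
  replace (Rabs ((x - y)/2)) with (Rabs (x-y) / 2) in H.
  2:{ unfold Rdiv. rewrite Rabs_mult. rewrite (Rabs_right (/2)) by lra. reflexivity. }
  rewrite (Rabs_right 2) by lra.
  assert (0 <= Rabs (sin ((x - y) / 2))) by apply Rabs_pos.
  assert (0 <= Rabs (cos ((x + y) / 2))) by apply Rabs_pos.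
  nra.
Qed.

Lemma small_sin x t : 0 < t -> t <= 1/10 -> Rabs (sin x) < t ->
  exists k : Z, Rabs (x - IZR k * PI) < 102/100 * t.
Proof.
  intros Ht0 Ht1 Hs.
  pose proof PI_RGT_0 as Hpi. pose proof PI_4 as Hpi4. pose proof PI2_3_2 as Hpi3.
  set (z := x / PI + 1/2).
  destruct (archimed z) as [Ha Hb].
  exists (up z - 1)%Z.
  rewrite minus_IZR. simpl (IZR 1).
  set (y := x - (IZR (up z) - 1) * PI).
  assert (Hy : - (PI/2) <= y < PI/2).
  { unfold y. assert (x = PI * (z - 1/2)) by (unfold z; field; lra).
    rewrite H. split; nra. }
  assert (Hsy : Rabs (sin y) = Rabs (sin x)).
  { unfold y. replace (x - (IZR (up z) - 1) * PI) with (x + IZR (1 - up z) * PI).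
    apply abs_sin_shift. rewrite minus_IZR. simpl (IZR 1). ring. }
  assert (Hw : forall w, 0 <= w -> w <= PI/2 -> sin w < t -> w < 102/100 * t).
  { intros w H0 H1 H2. pose proof (sin_lb_cube w H0 ltac:(lra) ltac:(lra)).
    assert (w < 3 * t) by nra.
    assert (w * w <= 9/100) by nra. nra. }
  fold y. unfold Rabs. destruct (Rcase_abs y).
  - apply Hw; try lra. rewrite sin_neg.
    assert (sin (-y) >= 0).
    { pose proof (sin_lb_cube (-y) ltac:(lra) ltac:(lra) ltac:(lra)). nra. }
    rewrite sin_neg in H. rewrite Rabs_left1 in Hsy by lra. lra.
  - apply Hw; try lra.
    pose proof (sin_lb_cube y ltac:(lra) ltac:(lra) ltac:(lra)).
    assert (0 <= sin y) by nra. rewrite Rabs_right in Hsy by lra. lra.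
Qed.

Lemma ac_sym x y e : ang_close x y e -> ang_close y x e.
Proof. intros [k Hk]. exists (-k)%Z. rewrite opp_IZR. rewrite <- Rabs_Ropp.
  replace (- (y - x - 2 * PI * - IZR k)) with (x - y - 2 * PI * IZR k) by ring. exact Hk. Qed.

Lemma ac_trans x y z e1 e2 : ang_close x y e1 -> ang_close y z e2 -> ang_close x z (e1 + e2).
Proof. intros [k1 H1] [k2 H2]. exists (k1 + k2)%Z. rewrite plus_IZR.
  replace (x - z - 2 * PI * (IZR k1 + IZR k2)) with ((x - y - 2*PI*IZR k1) + (y - z - 2*PI*IZR k2)) by ring.
  eapply Rle_lt_trans. apply Rabs_triang. lra. Qed.

Lemma ac_mono x y e e' : e <= e' -> ang_close x y e -> ang_close x y e'.
Proof. intros He [k Hk]. exists k. lra. Qed.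

Lemma ac_refl x e : 0 < e -> ang_close x x e.
Proof. intros He. exists 0%Z. replace (x - x - 2 * PI * IZR 0) with 0 by (simpl; ring).
  rewrite Rabs_R0. exact He. Qed.

Lemma ac_eqmod x y y' e n : y' = y + 2 * PI * IZR n -> ang_close x y e -> ang_close x y' e.
Proof. intros -> [k Hk]. exists (k - n)%Z. rewrite minus_IZR.
  replace (x - (y + 2 * PI * IZR n) - 2 * PI * (IZR k - IZR n)) with (x - y - 2 * PI * IZR k) by ring. exact Hk. Qed.

Lemma ac_eqmodl x x' y e n : x' = x + 2 * PI * IZR n -> ang_close x y e -> ang_close x' y e.
Proof. intros -> [k Hk]. exists (k + n)%Z. rewrite plus_IZR.
  replace (x + 2 * PI * IZR n - y - 2 * PI * (IZR k + IZR n)) with (x - y - 2 * PI * IZR k) by ring. exact Hk. Qed.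

Lemma ac_lin x y e s c : (s = 1 \/ s = -1) -> ang_close x y e -> ang_close (s * x + c) (s * y + c) e.
Proof. intros Hs [k Hk]. exists (if Rle_dec 0 s then k else (-k))%Z.
  destruct Hs as [-> | ->]; destruct (Rle_dec 0 _); try lra.
  - replace (1 * x + c - (1 * y + c) - 2 * PI * IZR k) with (x - y - 2 * PI * IZR k) by ring. exact Hk.
  - rewrite opp_IZR. rewrite <- Rabs_Ropp.
    replace (- (-1 * x + c - (-1 * y + c) - 2 * PI * - IZR k)) with (x - y - 2 * PI * IZR k) by ring. exact Hk.
Qed.

Inductive D3 : Type := I0 | I1 | I2 | F0 | F1 | F2.

Definition sg (g : D3) : bool := match g with I0 | I1 | I2 => false | _ => true end.
Definition sh (g : D3) : nat := match g with I0 | F0 => 0 | I1 | F1 => 1 | _ => 2 end.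
Definition mk (b : bool) (n : nat) : D3 :=
  match b, Nat.modulo n 3 with
  | false, 0 => I0 | false, 1 => I1 | false, _ => I2
  | true, 0 => F0 | true, 1 => F1 | true, _ => F2 end.
Definition comp (g h : D3) : D3 :=
  mk (xorb (sg g) (sg h)) ((if sg g then 3 - sh h else sh h) + sh g).
Definition inv (g : D3) : D3 := match g with I1 => I2 | I2 => I1 | x => x end.
Definition act (g : D3) (x : R) : R := (if sg g then - x else x) + INR (sh g) * (2 * PI / 3).

Definition D3eqb (g h : D3) : bool :=
  match g, h with
  | I0, I0 | I1, I1 | I2, I2 | F0, F0 | F1, F1 | F2, F2 => true | _, _ => false end.
Lemma D3eqb_eq g h : D3eqb g h = true <-> g = h.
Proof. destruct g, h; simpl; split; congruence. Qed.

Lemma act_comp g h x : exists n : Z, act g (act h x) = act (comp g h) x + 2 * PI * IZR n.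
Proof.
  destruct g, h; unfold act, comp; simpl;
  first [ exists 0%Z; simpl; lra | exists 1%Z; simpl; lra | exists (-1)%Z; simpl; lra ].
Qed.

Lemma act_I0 x : act I0 x = x.
Proof. unfold act; simpl; ring. Qed.

Lemma ac_act g x y e : ang_close x y e -> ang_close (act g x) (act g y) e.
Proof. intros H. unfold act. destruct (sg g).
  - replace (-x) with (-1 * x) by ring. replace (-y) with (-1*y) by ring. apply ac_lin; auto.
  - replace x with (1 * x) by ring. replace y with (1*y) by ring. apply ac_lin; auto. Qed.

Definition GA (x : R) (g : D3) (y : R) (e : R) : Prop := ang_close x (act g y) e.

Lemma GA_trans x y z g h e1 e2 : GA x g y e1 -> GA y h z e2 -> GA x (comp g h) z (e1 + e2).
Proof. unfold GA. intros H1 H2. apply (ac_act g) in H2.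
  destruct (act_comp g h z) as [n Hn]. rewrite Hn in H2.
  eapply ac_eqmod with (n := (-n)%Z). 2: exact (ac_trans _ _ _ _ _ H1 H2).
  rewrite opp_IZR. ring. Qed.

Lemma comp_inv_l g : comp (inv g) g = I0.
Proof. destruct g; reflexivity. Qed.
Lemma comp_inv_r g : comp g (inv g) = I0.
Proof. destruct g; reflexivity. Qed.

Lemma GA_sym x g y e : GA x g y e -> GA y (inv g) x e.
Proof. unfold GA. intros H. apply (ac_act (inv g)) in H.
  destruct (act_comp (inv g) g y) as [n Hn]. rewrite Hn, comp_inv_l, act_I0 in H.
  apply ac_sym in H. eapply ac_eqmodl with (n := (-n)%Z). 2: exact H. rewrite opp_IZR; ring. Qed.

Lemma GA_mono x g y e e' : e <= e' -> GA x g y e -> GA x g y e'.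
Proof. apply ac_mono. Qed.

Definition N (x : R) (j : nat) : R := Rabs (sin (x - INR j * PI / 3)).
Definition pull (g : D3) (j : nat) : nat :=
  Nat.modulo (if sg g then 3 - Nat.modulo (j + sh g) 3 else j + sh g) 3.

Lemma abs_sin_eq_shift a b (k : Z) : a = b + IZR k * PI -> Rabs (sin a) = Rabs (sin b).
Proof. intros ->. apply abs_sin_shift. Qed.
Lemma abs_sin_eq_nshift a b (k : Z) : a = - b + IZR k * PI -> Rabs (sin a) = Rabs (sin b).
Proof. intros ->. rewrite abs_sin_shift, sin_neg, Rabs_Ropp. reflexivity. Qed.

Ltac shift_tac :=
  first [ apply (abs_sin_eq_shift _ _ 0%Z); simpl; lra
        | apply (abs_sin_eq_shift _ _ 1%Z); simpl; lra
        | apply (abs_sin_eq_shift _ _ (-1)%Z); simpl; lra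
        | apply (abs_sin_eq_shift _ _ 2%Z); simpl; lra
        | apply (abs_sin_eq_shift _ _ (-2)%Z); simpl; lra
        | apply (abs_sin_eq_nshift _ _ 0%Z); simpl; lra
        | apply (abs_sin_eq_nshift _ _ 1%Z); simpl; lra
        | apply (abs_sin_eq_nshift _ _ (-1)%Z); simpl; lra
        | apply (abs_sin_eq_nshift _ _ 2%Z); simpl; lra
        | apply (abs_sin_eq_nshift _ _ (-2)%Z); simpl; lra ].

Lemma N_act g x j : (j < 3)%nat -> N (act g x) j = N x (pull g j).
Proof.
  intros Hj. unfold N, act, pull.
  destruct j as [|[|[|j]]]; [| | | lia]; destruct g; simpl; shift_tac.
Qed.

Lemma PI_gt3 : 3 < PI.
Proof. pose proof PI2_3_2. lra. Qed.

Lemma fix_classify g x e : ang_close (act g x) x e -> e <= 1 ->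
  g = I0 \/ (sg g = true /\ N x (sh g) < e / 2).
Proof.
  intros [k Hk] He. pose proof PI_gt3.
  assert (Hk' : (IZR k <= 0 \/ 1 <= IZR k)).
  { destruct (Z.le_gt_cases k 0); [left; apply IZR_le; lia | right; apply IZR_le; lia]. }
  unfold act in Hk. destruct g; simpl in Hk.
  - left; reflexivity.
  - exfalso. revert Hk. unfold Rabs; destruct Rcase_abs; intros; destruct Hk'; nra.
  - exfalso. revert Hk. unfold Rabs; destruct Rcase_abs; intros; destruct Hk'; nra.
  - right. split. reflexivity. unfold N. simpl sh.
    rewrite <- (abs_sin_shift k). eapply Rle_lt_trans. apply abs_sin_le.
    revert Hk. unfold Rabs; destruct Rcase_abs; destruct Rcase_abs; intros; simpl in *; lra.
  - right. split. reflexivity. unfold N. simpl sh.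
    rewrite <- (abs_sin_shift k). eapply Rle_lt_trans. apply abs_sin_le.
    revert Hk. unfold Rabs; destruct Rcase_abs; destruct Rcase_abs; intros; simpl in *; lra.
  - right. split. reflexivity. unfold N. simpl sh.
    rewrite <- (abs_sin_shift k). eapply Rle_lt_trans. apply abs_sin_le.
    revert Hk. unfold Rabs; destruct Rcase_abs; destruct Rcase_abs; intros; simpl in *; lra.
Qed.

Lemma uniq_act g1 g2 x e : ang_close (act g1 x) (act g2 x) e ->
  ang_close (act (comp (inv g2) g1) x) x e.
Proof.
  intros H. apply (ac_act (inv g2)) in H.
  destruct (act_comp (inv g2) g1 x) as [n1 H1]. destruct (act_comp (inv g2) g2 x) as [n2 H2].
  rewrite H1, H2, comp_inv_l, act_I0 in H.
  eapply ac_eqmodl with (n := (-n1)%Z). 2: eapply ac_eqmod with (n := (-n2)%Z). 3: exact H.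
  rewrite opp_IZR; ring. rewrite opp_IZR; ring.
Qed.

Lemma N_lip x y j e : ang_close x y e -> N x j <= N y j + e.
Proof.
  intros [k Hk]. unfold N.
  replace (x - INR j * PI / 3) with ((y - INR j * PI / 3 + (x - y - 2 * PI * IZR k)) + IZR (2 * k) * PI)
    by (rewrite mult_IZR; simpl; ring).
  rewrite abs_sin_shift.
  pose proof (sin_lip (y - INR j * PI / 3 + (x - y - 2 * PI * IZR k)) (y - INR j * PI / 3)).
  replace (y - INR j * PI / 3 + (x - y - 2 * PI * IZR k) - (y - INR j * PI / 3))
    with (x - y - 2 * PI * IZR k) in H by ring.
  pose proof (Rabs_triang_inv (sin (y - INR j * PI / 3 + (x - y - 2 * PI * IZR k))) (sin (y - INR j * PI / 3))).
  lra.
Qed.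

Lemma cos_diff_prod u v : Rabs (cos u - cos v) = 2 * (Rabs (sin ((u - v)/2)) * Rabs (sin ((u + v)/2))).
Proof. rewrite form2. rewrite !Rabs_mult. rewrite (Rabs_left (-2)) by lra. ring. Qed.

Lemma from_A u v k e : Rabs ((u - v)/2 - IZR k * PI) < e / 2 -> ang_close v u e.
Proof. intros H. exists (- k)%Z. rewrite opp_IZR.
  replace (v - u - 2 * PI * - IZR k) with (-2 * ((u - v)/2 - IZR k * PI)) by field.
  rewrite Rabs_mult, Rabs_left by lra. lra. Qed.

Lemma from_B u v k e : Rabs ((u + v)/2 - IZR k * PI) < e / 2 -> ang_close v (- u) e.
Proof. intros H. exists k.
  replace (v - - u - 2 * PI * IZR k) with (2 * ((u + v)/2 - IZR k * PI)) by field.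
  rewrite Rabs_mult, Rabs_right by lra. lra. Qed.

Lemma loose_lemma u v g : 0 < g -> g <= 1/100 -> Rabs (cos u - cos v) < g * g ->
  ang_close v u (3/2 * g) \/ ang_close v (- u) (3/2 * g).
Proof.
  intros Hg0 Hg1 H. rewrite cos_diff_prod in H.
  set (a := Rabs (sin ((u - v) / 2))) in *. set (b := Rabs (sin ((u + v) / 2))) in *.
  assert (0 <= a) by apply Rabs_pos. assert (0 <= b) by apply Rabs_pos.
  assert (a < 71/100 * g \/ b < 71/100 * g) as [Ha|Hb].
  { destruct (Rlt_dec a (71/100*g)); [left; auto|]. destruct (Rlt_dec b (71/100*g)); [right; auto|]. nra. }
  - destruct (small_sin ((u - v)/2) (71/100*g) ltac:(lra) ltac:(lra) Ha) as [k Hk]. left. apply (from_A _ _ k). lra.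
  - destruct (small_sin ((u + v)/2) (71/100*g) ltac:(lra) ltac:(lra) Hb) as [k Hk]. right. apply (from_B _ _ k). lra.
Qed.

Lemma abs_cos_ge x : 1 - Rabs (sin x) <= Rabs (cos x).
Proof.
  pose proof (sin2_cos2 x). pose proof (SIN_bound x). pose proof (COS_bound x).
  unfold Rsqr in H. unfold Rabs; destruct Rcase_abs; destruct Rcase_abs; nra.
Qed.

Lemma sin_sub_ge x y : Rabs (sin x) * (1 - Rabs (sin y)) - Rabs (sin y) <= Rabs (sin (x - y)).
Proof.
  rewrite sin_minus. pose proof (abs_cos_ge y). pose proof (COS_bound x).
  assert (Rabs (cos x) <= 1) by (unfold Rabs; destruct Rcase_abs; lra).
  assert (Rabs (cos y) <= 1) by (pose proof (COS_bound y); unfold Rabs; destruct Rcase_abs; lra).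
  pose proof (Rabs_triang_inv (sin x * cos y) (cos x * sin y)).
  rewrite !Rabs_mult in H3.
  assert (0 <= Rabs (sin x)) by apply Rabs_pos.
  assert (0 <= Rabs (sin y)) by apply Rabs_pos.
  assert (Rabs (cos x) * Rabs (sin y) <= Rabs (sin y)) by nra.
  assert (Rabs (sin x) * (1 - Rabs (sin y)) <= Rabs (sin x) * Rabs (cos y)) by nra.
  lra.
Qed.

Lemma tight_lemma u v g s : 0 < g -> 790 * g <= s -> s <= Rabs (sin u) ->
  Rabs (cos u - cos v) < g * g ->
  ang_close v u (103/100 * (g * g) / s) \/ ang_close v (- u) (103/100 * (g * g) / s).
Proof.
  intros Hg0 Hgs Hsu H. rewrite cos_diff_prod in H.
  assert (Hs1 : s <= 1) by (pose proof (SIN_bound u); unfold Rabs in Hsu; destruct Rcase_abs in Hsu; lra).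
  assert (Hs0 : 0 < s) by lra.
  set (A := (u - v) / 2) in *. set (B := (u + v) / 2) in *.
  set (a := Rabs (sin A)) in *. set (b := Rabs (sin B)) in *.
  assert (0 <= a) by apply Rabs_pos. assert (0 <= b) by apply Rabs_pos.
  set (t := g * g / (1996/1000 * s)).
  assert (Ht0 : 0 < t) by (unfold t; apply Rdiv_lt_0_compat; nra).
  assert (Ht1 : t <= 1/10).
  { unfold t. apply Rmult_le_reg_r with (1996/1000*s). nra. unfold Rdiv. rewrite Rmult_assoc, Rinv_l by nra. nra. }
  assert (Hts : 204/100 * t < 103/100 * (g * g) / s).
  { assert (Hq : 0 < g * g / s) by (apply Rdiv_lt_0_compat; nra).
    replace (103 / 100 * (g * g) / s) with (103/100 * (g * g / s)) by (field; lra).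
    replace t with ((g * g / s) * (1000/1996)) by (unfold t; field; lra).
    set (q := g * g / s) in *. lra. }
  assert (a < 71/100 * g \/ b < 71/100 * g) as [Ha|Hb].
  { destruct (Rlt_dec a (71/100*g)); [left; auto|]. destruct (Rlt_dec b (71/100*g)); [right; auto|]. nra. }
  - assert (Hb : s - 2 * a <= b).
    { pose proof (sin_sub_ge u A). replace (u - A) with B in H2 by (unfold A, B; field). fold a b in H2.
      assert (Rabs (sin u) * (1 - a) >= s * (1 - a)) by (apply Rle_ge, Rmult_le_compat_r; lra). nra. }
    assert (Hat : a < t).
    { assert (a * (1996/1000*s) < g*g) by nra. unfold t. apply (Rmult_lt_reg_r (1996/1000*s)); [nra|].
      replace (g*g/(1996/1000*s)*(1996/1000*s)) with (g*g) by (field; lra). lra. }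
    destruct (small_sin A t Ht0 Ht1 Hat) as [k Hk]. left. apply (from_A _ _ k). fold A. lra.
  - assert (Ha : s - 2 * b <= a).
    { pose proof (sin_sub_ge u B). replace (u - B) with A in H2 by (unfold A, B; field). fold a b in H2.
      assert (Rabs (sin u) * (1 - b) >= s * (1 - b)) by (apply Rle_ge, Rmult_le_compat_r; lra). nra. }
    assert (Hbt : b < t).
    { assert (b * (1996/1000*s) < g*g) by nra. unfold t. apply (Rmult_lt_reg_r (1996/1000*s)); [nra|].
      replace (g*g/(1996/1000*s)*(1996/1000*s)) with (g*g) by (field; lra). lra. }
    destruct (small_sin B t Ht0 Ht1 Hbt) as [k Hk]. right. apply (from_B _ _ k). fold B. lra.
Qed.

Definition Rd (d : dir) : D3 := match d with Defs.A1 => F0 | Defs.A2 => F2 | Defs.A3 => F1 end.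
Definition ax (d : dir) : nat := match d with Defs.A1 => 0%nat | Defs.A2 => 2%nat | Defs.A3 => 1%nat end.

Lemma Rd_phi d x : exists n : Z, 2 * phi d - x = act (Rd d) x + 2 * PI * IZR n.
Proof. destruct d; unfold act, phi; simpl;
  first [ exists 0%Z; simpl; lra | exists 1%Z; simpl; lra | exists (-1)%Z; simpl; lra ]. Qed.

Lemma N_phi d x : Rabs (sin (x - phi d)) = N x (ax d).
Proof. unfold N; destruct d; unfold phi; simpl; shift_tac. Qed.

Lemma flip_flip d x : flip d (flip d x) = x.
Proof. destruct d, x as [[? ?] ?]; simpl; rewrite Bool.negb_involutive; reflexivity. Qed.
Lemma coord_flip d x : coord d (flip d x) = negb (coord d x).
Proof. destruct d, x as [[? ?] ?]; reflexivity. Qed.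

Lemma edge_cos (theta : site -> R) Gamma :
  (forall (a : dir) (r : site), coord a r = false ->
         Rabs (Scomp a (theta r) - Scomp a (theta (flip a r))) < Gamma) ->
  forall x d, Rabs (cos (theta x - phi d) - cos (theta (flip d x) - phi d)) < Gamma.
Proof.
  intros H x d. destruct (coord d x) eqn:E.
  - pose proof (H d (flip d x)) as H'. rewrite coord_flip, E, flip_flip in H'.
    specialize (H' eq_refl). unfold Scomp in H'. rewrite Rabs_minus_sym. exact H'.
  - exact (H d x E).
Qed.

Lemma ac_unshift a b c e : ang_close (a - c) (b - c) e -> ang_close a b e.
Proof. intros [k Hk]. exists k. replace (a - b - 2 * PI * IZR k) with (a - c - (b - c) - 2 * PI * IZR k) by ring. exact Hk. Qed.

Lemma refl_conv x y d e : ang_close (y - phi d) (- (x - phi d)) e -> GA y (Rd d) x e.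
Proof. intros H. unfold GA. destruct (Rd_phi d x) as [n Hn].
  apply ac_eqmod with (y := 2 * phi d - x) (n := (-n)%Z). rewrite Hn, opp_IZR. ring.
  apply ac_unshift with (c := phi d). replace (2 * phi d - x - phi d) with (- (x - phi d)) by ring. exact H. Qed.

Lemma same_conv x y d e : ang_close (y - phi d) (x - phi d) e -> GA y I0 x e.
Proof. intros H. unfold GA. rewrite act_I0. exact (ac_unshift _ _ _ _ H). Qed.

Lemma edge_loose theta g :
  0 < g -> g <= 1/100 ->
  (forall x d, Rabs (cos (theta x - phi d) - cos (theta (flip d x) - phi d)) < g * g) ->
  forall y d, exists L, (L = I0 \/ L = Rd d) /\ GA (theta (flip d y)) L (theta y) (3/2 * g).
Proof.
  intros Hg0 Hg1 H y d. destruct (loose_lemma _ _ g Hg0 Hg1 (H y d)) as [H1|H1].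
  - exists I0. split; auto. eapply same_conv; eauto.
  - exists (Rd d). split; auto. eapply refl_conv; eauto.
Qed.

Lemma edge_tight theta g s y d :
  0 < g -> 790 * g <= s -> s <= N (theta y) (ax d) ->
  Rabs (cos (theta y - phi d) - cos (theta (flip d y) - phi d)) < g * g ->
  exists L, (L = I0 \/ L = Rd d) /\ GA (theta (flip d y)) L (theta y) (103/100 * (g * g) / s).
Proof.
  intros Hg0 Hgs Hs H. rewrite <- N_phi in Hs. destruct (tight_lemma _ _ g s Hg0 Hgs Hs H) as [H1|H1].
  - exists I0. split; auto. eapply same_conv; eauto.
  - exists (Rd d). split; auto. eapply refl_conv; eauto.
Qed.

Definition fl (d : dir) (b : bool) (y : site) : site := if b then flip d y else y.

Lemma site_decomp (r x : site) : exists b1 b2 b3, x = fl Defs.A1 b1 (fl Defs.A2 b2 (fl Defs.A3 b3 r)).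
Proof.
  destruct r as [[r1 r2] r3], x as [[x1 x2] x3].
  exists (xorb r1 x1), (xorb r2 x2), (xorb r3 x3).
  destruct r1, r2, r3, x1, x2, x3; reflexivity.
Qed.

Lemma path_any (theta : site -> R) (r : site) e : 0 < e ->
  (forall y d, exists L, (L = I0 \/ L = Rd d) /\ GA (theta (flip d y)) L (theta y) e) ->
  forall x, exists g, GA (theta x) g (theta r) (3 * e).
Proof.
  intros He H x.
  assert (Hs : forall d b y, exists L, GA (theta (fl d b y)) L (theta y) e).
  { intros d [|] y; simpl.
    - destruct (H y d) as [L [_ HL]]. eauto.
    - exists I0. unfold GA. rewrite act_I0. apply ac_refl; auto. }
  destruct (site_decomp r x) as [b1 [b2 [b3 ->]]].
  destruct (Hs Defs.A3 b3 r) as [g3 H3]. destruct (Hs Defs.A2 b2 (fl Defs.A3 b3 r)) as [g2 H2].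
  destruct (Hs Defs.A1 b1 (fl Defs.A2 b2 (fl Defs.A3 b3 r))) as [g1 H1].
  exists (comp g1 (comp g2 g3)). eapply GA_mono. 2: eapply GA_trans; [exact H1|eapply GA_trans; [exact H2|exact H3]]. lra.
Qed.

Definition dir_eqb (a b : dir) : bool :=
  match a, b with Defs.A1, Defs.A1 | Defs.A2, Defs.A2 | Defs.A3, Defs.A3 => true | _, _ => false end.

Definition lab (P : option dir) (d : dir) : D3 :=
  match P with Some a => if dir_eqb a d then Rd d else I0 | None => I0 end.
Definition pat (P : option dir) (r x : site) : D3 :=
  match P with Some a => if Bool.eqb (coord a x) (coord a r) then I0 else Rd a | None => I0 end.

Lemma path_lab (theta : site -> R) (r : site) P e : 0 < e ->
  (forall y d, GA (theta (flip d y)) (lab P d) (theta y) e) ->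
  forall x, GA (theta x) (pat P r x) (theta r) (3 * e).
Proof.
  intros He H x.
  assert (Hs : forall d b y, GA (theta (fl d b y)) (if b then lab P d else I0) (theta y) e).
  { intros d [|] y; simpl.
    - apply H.
    - unfold GA. rewrite act_I0. apply ac_refl; auto. }
  destruct (site_decomp r x) as [b1 [b2 [b3 ->]]].
  pose proof (Hs Defs.A3 b3 r) as H3. pose proof (Hs Defs.A2 b2 (fl Defs.A3 b3 r)) as H2.
  pose proof (Hs Defs.A1 b1 (fl Defs.A2 b2 (fl Defs.A3 b3 r))) as H1.
  pose proof (GA_trans _ _ _ _ _ _ _ H1 (GA_trans _ _ _ _ _ _ _ H2 H3)) as HH.
  replace (pat P r (fl Defs.A1 b1 (fl Defs.A2 b2 (fl Defs.A3 b3 r)))) with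
    (comp (if b1 then lab P Defs.A1 else I0) (comp (if b2 then lab P Defs.A2 else I0) (if b3 then lab P Defs.A3 else I0))).
  eapply GA_mono; [|exact HH]. lra.
  destruct P as [[| |]|], b1, b2, b3, r as [[[|] [|]] [|]]; reflexivity.
Qed.

Definition inK (kb : option nat) (g : D3) : bool :=
  match kb with None => D3eqb g I0 | Some b => D3eqb g I0 || D3eqb g (mk true b) end.
Definition ok kb d v w : bool :=
  inK kb (comp (inv v) w) || inK kb (comp (inv (comp (Rd d) v)) w).
Definition EE kb d v w : bool := ok kb d v w && ok kb d w v.
Definition kbne (kb : option nat) (a : dir) : bool :=
  match kb with Some b => negb (Nat.eqb b (ax a)) | None => true end.

Definition allD (f : D3 -> bool) : bool := forallb f [I0; I1; I2; F0; F1; F2].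
Definition allS (f : site -> bool) : bool :=
  forallb f [(false,false,false);(true,false,false);(true,true,false);(false,true,false);
             (false,true,true);(true,true,true);(true,false,true);(false,false,true)].
Definition allDir (f : dir -> bool) : bool := forallb f [Defs.A1; Defs.A2; Defs.A3].
Definition allK (f : option nat -> bool) : bool := forallb f [None; Some 0%nat; Some 1%nat; Some 2%nat].
Definition allB (f : nat -> bool) : bool := forallb f [0%nat; 1%nat; 2%nat].

Lemma allD_spec f : allD f = true -> forall v, f v = true.
Proof. unfold allD. rewrite forallb_forall. intros H v. apply H. destruct v; simpl; tauto. Qed.
Lemma allS_spec f : allS f = true -> forall v, f v = true.
Proof. unfold allS. rewrite forallb_forall. intros H v. apply H. destruct v as [[[|] [|]] [|]]; simpl; tauto. Qed.
Lemma allDir_spec f : allDir f = true -> forall v, f v = true.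
Proof. unfold allDir. rewrite forallb_forall. intros H v. apply H. destruct v; simpl; tauto. Qed.
Lemma allK_spec f : allK f = true -> forall v, (match v with Some b => (b < 3)%nat | None => True end) -> f v = true.
Proof. unfold allK. rewrite forallb_forall. intros H v Hv. apply H. destruct v as [[|[|[|]]]|]; simpl; try tauto; lia. Qed.
Lemma allB_spec f : allB f = true -> forall v, (v < 3)%nat -> f v = true.
Proof. unfold allB. rewrite forallb_forall. intros H v Hv. apply H. destruct v as [|[|[|]]]; simpl; try tauto; lia. Qed.

Definition s0 : site := (false,false,false).
Definition s1 : site := (true,false,false).
Definition s2 : site := (true,true,false).
Definition s3 : site := (false,true,false).
Definition s4 : site := (false,true,true).
Definition s5 : site := (true,true,true).
Definition s6 : site := (true,false,true).
Definition s7 : site := (false,false,true).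

Definition site_eqb (x y : site) : bool :=
  match x, y with ((x1,x2),x3), ((y1,y2),y3) => Bool.eqb x1 y1 && Bool.eqb x2 y2 && Bool.eqb x3 y3 end.
Lemma site_eqb_eq x y : site_eqb x y = true -> x = y.
Proof. destruct x as [[[|] [|]] [|]], y as [[[|] [|]] [|]]; simpl; congruence. Qed.

Definition rootc r kb s v : bool := if site_eqb r s then inK kb v else true.
Notation ifc c X := (if c then X else true).

Definition finalc r kb v0 v1 v2 v3 v4 v5 v6 v7 : bool :=
  (inK kb v0 && inK kb v1 && inK kb v2 && inK kb v3 && inK kb v4 && inK kb v5 && inK kb v6 && inK kb v7)
  || existsb (fun a => kbne kb a &&
       inK kb (comp (inv (pat (Some a) r s0)) v0) && inK kb (comp (inv (pat (Some a) r s1)) v1) &&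
       inK kb (comp (inv (pat (Some a) r s2)) v2) && inK kb (comp (inv (pat (Some a) r s3)) v3) &&
       inK kb (comp (inv (pat (Some a) r s4)) v4) && inK kb (comp (inv (pat (Some a) r s5)) v5) &&
       inK kb (comp (inv (pat (Some a) r s6)) v6) && inK kb (comp (inv (pat (Some a) r s7)) v7))
     [Defs.A1; Defs.A2; Defs.A3].

Definition chk (r : site) (kb : option nat) : bool :=
  allD (fun v0 => ifc (rootc r kb s0 v0) (
  allD (fun v1 => ifc (rootc r kb s1 v1 && EE kb Defs.A1 v0 v1) (
  allD (fun v2 => ifc (rootc r kb s2 v2 && EE kb Defs.A2 v1 v2) (
  allD (fun v3 => ifc (rootc r kb s3 v3 && EE kb Defs.A1 v2 v3 && EE kb Defs.A2 v0 v3) (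
  allD (fun v4 => ifc (rootc r kb s4 v4 && EE kb Defs.A3 v3 v4) (
  allD (fun v5 => ifc (rootc r kb s5 v5 && EE kb Defs.A1 v4 v5 && EE kb Defs.A3 v2 v5) (
  allD (fun v6 => ifc (rootc r kb s6 v6 && EE kb Defs.A2 v5 v6 && EE kb Defs.A3 v1 v6) (
  allD (fun v7 => ifc (rootc r kb s7 v7 && EE kb Defs.A1 v6 v7 && EE kb Defs.A3 v0 v7 && EE kb Defs.A2 v4 v7) (
    finalc r kb v0 v1 v2 v3 v4 v5 v6 v7)))))))))))))))).

Definition chk_all : bool := allS (fun r => allK (fun kb => chk r kb)).

Lemma chk_all_true : chk_all = true.
Proof. vm_compute. reflexivity. Qed.

Ltac splitb := repeat match goal with H : _ && _ = true |- _ => apply andb_prop in H; destruct H end.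

Lemma disc r kb (h : site -> D3) :
  (match kb with Some b => (b < 3)%nat | None => True end) ->
  inK kb (h r) = true ->
  (forall x d, ok kb d (h x) (h (flip d x)) = true) ->
  (forall x, inK kb (h x) = true) \/
  exists a, kbne kb a = true /\ forall x, inK kb (comp (inv (pat (Some a) r x)) (h x)) = true.
Proof.
  intros Hkb Hr Hok.
  assert (HE : forall x d, EE kb d (h x) (h (flip d x)) = true).
  { intros x d. unfold EE. rewrite Hok. pose proof (Hok (flip d x) d) as H'. rewrite flip_flip in H'. rewrite H'. reflexivity. }
  assert (Hroot : forall s, rootc r kb s (h s) = true).
  { intros s. unfold rootc. destruct (site_eqb r s) eqn:E; auto. apply site_eqb_eq in E. subst. auto. }
  pose proof chk_all_true as H. unfold chk_all in H. pose proof (allS_spec _ H r) as H'. cbv beta in H'.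
  pose proof (allK_spec _ H' kb Hkb) as HC. clear H H'. unfold chk in HC.
  assert (e01 : EE kb Defs.A1 (h s0) (h s1) = true) by exact (HE s0 Defs.A1).
  assert (e12 : EE kb Defs.A2 (h s1) (h s2) = true) by exact (HE s1 Defs.A2).
  assert (e23 : EE kb Defs.A1 (h s2) (h s3) = true) by exact (HE s2 Defs.A1).
  assert (e03 : EE kb Defs.A2 (h s0) (h s3) = true) by exact (HE s0 Defs.A2).
  assert (e34 : EE kb Defs.A3 (h s3) (h s4) = true) by exact (HE s3 Defs.A3).
  assert (e45 : EE kb Defs.A1 (h s4) (h s5) = true) by exact (HE s4 Defs.A1).
  assert (e25 : EE kb Defs.A3 (h s2) (h s5) = true) by exact (HE s2 Defs.A3).
  assert (e56 : EE kb Defs.A2 (h s5) (h s6) = true) by exact (HE s5 Defs.A2).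
  assert (e16 : EE kb Defs.A3 (h s1) (h s6) = true) by exact (HE s1 Defs.A3).
  assert (e67 : EE kb Defs.A1 (h s6) (h s7) = true) by exact (HE s6 Defs.A1).
  assert (e07 : EE kb Defs.A3 (h s0) (h s7) = true) by exact (HE s0 Defs.A3).
  assert (e47 : EE kb Defs.A2 (h s4) (h s7) = true) by exact (HE s4 Defs.A2).
  pose proof (allD_spec _ HC (h s0)) as H0; cbv beta in H0; rewrite (Hroot s0) in H0.
  pose proof (allD_spec _ H0 (h s1)) as H1; cbv beta in H1; rewrite (Hroot s1), e01 in H1. cbn [andb] in H1.
  pose proof (allD_spec _ H1 (h s2)) as H2; cbv beta in H2; rewrite (Hroot s2), e12 in H2. cbn [andb] in H2.
  pose proof (allD_spec _ H2 (h s3)) as H3; cbv beta in H3; rewrite (Hroot s3), e23, e03 in H3. cbn [andb] in H3.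
  pose proof (allD_spec _ H3 (h s4)) as H4; cbv beta in H4; rewrite (Hroot s4), e34 in H4. cbn [andb] in H4.
  pose proof (allD_spec _ H4 (h s5)) as H5; cbv beta in H5; rewrite (Hroot s5), e45, e25 in H5. cbn [andb] in H5.
  pose proof (allD_spec _ H5 (h s6)) as H6; cbv beta in H6; rewrite (Hroot s6), e56, e16 in H6. cbn [andb] in H6.
  pose proof (allD_spec _ H6 (h s7)) as H7; cbv beta in H7; rewrite (Hroot s7), e67, e07, e47 in H7. cbn [andb] in H7.
  unfold finalc in H7. apply orb_prop in H7. destruct H7 as [H7|H7].
  - left. splitb. intros [[[|] [|]] [|]]; assumption.
  - right. apply existsb_exists in H7. destruct H7 as [a [_ Ha]]. exists a. splitb. split; auto.
    intros [[[|] [|]] [|]]; assumption.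
Qed.

Definition allP (f : option dir -> bool) : bool := forallb f [None; Some Defs.A1; Some Defs.A2; Some Defs.A3].
Lemma allP_spec f : allP f = true -> forall v, f v = true.
Proof. unfold allP. rewrite forallb_forall. intros H v. apply H. destruct v as [[| |]|]; simpl; tauto. Qed.

Definition chkII : bool :=
  allP (fun P => allS (fun r => allS (fun x => allDir (fun d =>
    forallb (fun L => ifc (D3eqb (comp (inv (comp L (pat P r x))) (pat P r (flip d x))) I0)
                          (D3eqb L (lab P d))) [I0; Rd d])))).
Lemma chkII_true : chkII = true. Proof. vm_compute. reflexivity. Qed.

Lemma caseII_lab P r x d L : (L = I0 \/ L = Rd d) ->
  comp (inv (comp L (pat P r x))) (pat P r (flip d x)) = I0 -> L = lab P d.
Proof.
  intros HL He. pose proof chkII_true as H. unfold chkII in H.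
  pose proof (allP_spec _ H P) as H1; cbv beta in H1.
  pose proof (allS_spec _ H1 r) as H2; cbv beta in H2.
  pose proof (allS_spec _ H2 x) as H3; cbv beta in H3.
  pose proof (allDir_spec _ H3 d) as H4; cbv beta in H4.
  rewrite forallb_forall in H4. specialize (H4 L ltac:(destruct HL; subst; simpl; tauto)).
  rewrite He in H4. simpl in H4. apply D3eqb_eq. exact H4.
Qed.

Lemma caseII_eq p q : D3eqb (comp (inv p) q) I0 = true -> q = p.
Proof. destruct p, q; simpl; congruence. Qed.

Definition memb b a r x hx : bool := inK (Some b) (comp (inv (pat (Some a) r x)) hx).
Definition tightb b hx d : bool := negb (Nat.eqb (pull hx (ax d)) b).

Definition chkI1 : bool :=
  allB (fun b => allDir (fun a => ifc (kbne (Some b) a) (allS (fun r => allS (fun x => allDir (fun d =>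
    allD (fun hx => ifc (memb b a r x hx && tightb b hx d) (allD (fun hx' => ifc (memb b a r (flip d x) hx')
      (forallb (fun L => ifc (inK (Some b) (comp (inv (comp L hx)) hx')) (D3eqb L (lab (Some a) d))) [I0; Rd d])))))))))).
Lemma chkI1_true : chkI1 = true. Proof. vm_compute. reflexivity. Qed.

Definition chkI2 : bool :=
  allB (fun b => allDir (fun a => ifc (kbne (Some b) a) (allS (fun r => allS (fun x => allDir (fun d =>
    allD (fun hx => ifc (memb b a r x hx && negb (tightb b hx d)) (
       negb (dir_eqb a d) && tightb b hx a &&
       allD (fun hy1 => ifc (memb b a r (flip a x) hy1) (tightb b hy1 d)) &&
       allD (fun hy2 => ifc (memb b a r (flip d (flip a x)) hy2) (tightb b hy2 a)))))))))).
Lemma chkI2_true : chkI2 = true. Proof. vm_compute. reflexivity. Qed.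

Lemma caseI_lab b a r x d L hx hx' : (b < 3)%nat -> kbne (Some b) a = true ->
  memb b a r x hx = true -> tightb b hx d = true -> memb b a r (flip d x) hx' = true ->
  (L = I0 \/ L = Rd d) -> inK (Some b) (comp (inv (comp L hx)) hx') = true -> L = lab (Some a) d.
Proof.
  intros Hb Ha Hm Ht Hm' HL Hk. pose proof chkI1_true as H. unfold chkI1 in H.
  pose proof (allB_spec _ H b Hb) as H1; cbv beta in H1.
  pose proof (allDir_spec _ H1 a) as H2; cbv beta in H2. rewrite Ha in H2.
  pose proof (allS_spec _ H2 r) as H3; cbv beta in H3.
  pose proof (allS_spec _ H3 x) as H4; cbv beta in H4.
  pose proof (allDir_spec _ H4 d) as H5; cbv beta in H5.
  pose proof (allD_spec _ H5 hx) as H6; cbv beta in H6. rewrite Hm, Ht in H6. simpl andb in H6.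
  pose proof (allD_spec _ H6 hx') as H7; cbv beta in H7. rewrite Hm' in H7.
  rewrite forallb_forall in H7. specialize (H7 L ltac:(destruct HL; subst; simpl; tauto)).
  rewrite Hk in H7. apply D3eqb_eq. exact H7.
Qed.

Lemma caseI_detour b a r x d hx hy1 hy2 : (b < 3)%nat -> kbne (Some b) a = true ->
  memb b a r x hx = true -> tightb b hx d = false ->
  memb b a r (flip a x) hy1 = true -> memb b a r (flip d (flip a x)) hy2 = true ->
  dir_eqb a d = false /\ tightb b hx a = true /\ tightb b hy1 d = true /\ tightb b hy2 a = true.
Proof.
  intros Hb Ha Hm Ht Hm1 Hm2. pose proof chkI2_true as H. unfold chkI2 in H.
  pose proof (allB_spec _ H b Hb) as H1; cbv beta in H1.
  pose proof (allDir_spec _ H1 a) as H2; cbv beta in H2. rewrite Ha in H2.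
  pose proof (allS_spec _ H2 r) as H3; cbv beta in H3.
  pose proof (allS_spec _ H3 x) as H4; cbv beta in H4.
  pose proof (allDir_spec _ H4 d) as H5; cbv beta in H5.
  pose proof (allD_spec _ H5 hx) as H6; cbv beta in H6. rewrite Hm, Ht in H6. cbn [negb andb] in H6.
  apply andb_prop in H6 as [H6 Hy2]. apply andb_prop in H6 as [H6 Hy1]. apply andb_prop in H6 as [Hd Hta].
  pose proof (allD_spec _ Hy1 hy1) as H7; cbv beta in H7. rewrite Hm1 in H7.
  pose proof (allD_spec _ Hy2 hy2) as H8; cbv beta in H8. rewrite Hm2 in H8.
  apply negb_true_iff in Hd. auto.
Qed.

Lemma act_mk x j : (j < 3)%nat -> act (mk true j) x = - x + INR j * (2 * PI / 3).
Proof. intros Hj. destruct j as [|[|[|]]]; try lia; reflexivity. Qed.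

Lemma near_w x j t : (j < 3)%nat -> 0 < t -> t <= 1/10 -> N x j < t ->
  exists tau, (1 <= tau <= 6)%nat /\ ang_close x (w_angle tau) (102/100 * t) /\
    ang_close (act (mk true j) x) (w_angle tau) (102/100 * t).
Proof.
  intros Hj Ht0 Ht1 HN. unfold N in HN.
  destruct (small_sin (x - INR j * PI / 3) t Ht0 Ht1 HN) as [k Hk].
  set (n := (Z.of_nat j + 3 * k)%Z).
  assert (Hn : IZR n = INR j + 3 * IZR k) by (unfold n; rewrite plus_IZR, mult_IZR, <- INR_IZR_INZ; simpl; ring).
  pose proof (Z.div_mod n 6 ltac:(lia)) as Hdm. pose proof (Z.mod_pos_bound n 6 ltac:(lia)) as Hmb.
  set (q := (n / 6)%Z) in *. set (m := (n mod 6)%Z) in *.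
  assert (Hnqm : IZR n = 6 * IZR q + IZR m) by (rewrite Hdm at 1; rewrite plus_IZR, mult_IZR; simpl; ring).
  assert (Hex : exists tau q', (1 <= tau <= 6)%nat /\ INR tau = IZR n - 6 * IZR q').
  { destruct (Z.eq_dec m 0) as [Hm0|Hm0].
    - exists 6%nat, (q - 1)%Z. split. lia. rewrite minus_IZR, Hnqm, Hm0. simpl. ring.
    - exists (Z.to_nat m), q. split. lia. rewrite INR_IZR_INZ, Z2Nat.id by lia. rewrite Hnqm. ring. }
  destruct Hex as [tau [q' [Htau Ht]]].
  exists tau. split; [exact Htau|]. split.
  - exists q'. unfold w_angle.
    replace (x - PI * INR tau / 3 - 2 * PI * IZR q') with (x - INR j * PI / 3 - IZR k * PI)
      by (rewrite Ht, Hn; field). lra.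
  - exists (q' - k)%Z. rewrite act_mk by exact Hj. unfold w_angle. rewrite minus_IZR.
    replace (- x + INR j * (2 * PI / 3) - PI * INR tau / 3 - 2 * PI * (IZR q' - IZR k))
      with (- (x - INR j * PI / 3 - IZR k * PI)) by (rewrite Ht, Hn; field).
    rewrite Rabs_Ropp. lra.
Qed.

Lemma sqrt3_ge : 173/100 <= sqrt 3.
Proof.
  rewrite <- (sqrt_pow2 (173/100)) by lra. apply sqrt_le_1_alt. simpl. lra.
Qed.

Lemma sin_plus_pi3 y : 865/1000 - 2 * Rabs (sin y) <= Rabs (sin (y + PI/3)).
Proof.
  rewrite sin_plus, sin_PI3, cos_PI3. pose proof sqrt3_ge. pose proof (abs_cos_ge y).
  pose proof (Rabs_triang_inv (cos y * (sqrt 3 / 2)) (- (sin y * (1/2)))).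
  replace (cos y * (sqrt 3 / 2) - - (sin y * (1 / 2))) with (sin y * (1 / 2) + cos y * (sqrt 3 / 2)) in H1 by ring.
  rewrite Rabs_Ropp, !Rabs_mult in H1. rewrite (Rabs_right (sqrt 3 / 2)) in H1 by lra.
  rewrite (Rabs_right (1/2)) in H1 by lra.
  assert (0 <= Rabs (sin y)) by apply Rabs_pos. assert (sqrt 3 <= 2).
  { rewrite <- (sqrt_pow2 2) by lra. apply sqrt_le_1_alt. simpl. lra. }
  assert (Rabs (cos y) * (sqrt 3 / 2) >= (1 - Rabs (sin y)) * (173/200)).
  { assert (Rabs (sin y) <= 1) by (pose proof (SIN_bound y); unfold Rabs; destruct Rcase_abs; lra).
    nra. }
  lra.
Qed.

Lemma sin_minus_pi3 y : 865/1000 - 2 * Rabs (sin y) <= Rabs (sin (y - PI/3)).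
Proof.
  rewrite <- (Rabs_Ropp (sin (y - PI/3))), <- sin_neg. replace (- (y - PI/3)) with (- y + PI/3) by ring.
  rewrite <- (Rabs_Ropp (sin y)), <- sin_neg. apply sin_plus_pi3.
Qed.

Lemma other_axes x b j : (b < 3)%nat -> (j < 3)%nat -> j <> b -> N x b < 1/100 -> 84/100 <= N x j.
Proof.
  intros Hb Hj Hjb HN. unfold N in *.
  set (y := x - INR b * PI / 3) in *.
  destruct b as [|[|[|]]]; destruct j as [|[|[|]]]; try lia; simpl in y |- *.
  - replace (x - 1 * PI / 3) with (y - PI/3) by (unfold y; simpl; lra). pose proof (sin_minus_pi3 y). lra.
  - rewrite (abs_sin_eq_shift _ (y + PI/3) (-1)%Z) by (unfold y; simpl; lra). pose proof (sin_plus_pi3 y). lra.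
  - replace (x - 0 * PI / 3) with (y + PI/3) by (unfold y; simpl; lra). pose proof (sin_plus_pi3 y). lra.
  - replace (x - (1 + 1) * PI / 3) with (y - PI/3) by (unfold y; simpl; lra). pose proof (sin_minus_pi3 y). lra.
  - rewrite (abs_sin_eq_shift _ (y - PI/3) 1%Z) by (unfold y; simpl; lra). pose proof (sin_minus_pi3 y). lra.
  - replace (x - 1 * PI / 3) with (y + PI/3) by (unfold y; simpl; lra). pose proof (sin_plus_pi3 y). lra.
Qed.

Lemma site_choice (P : site -> D3 -> Prop) : (forall x, exists g, P x g) -> exists h, forall x, P x (h x).
Proof.
  intros H.
  destruct (H (false,false,false)) as [g0 H0]. destruct (H (false,false,true)) as [g1 H1].
  destruct (H (false,true,false)) as [g2 H2]. destruct (H (false,true,true)) as [g3 H3].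
  destruct (H (true,false,false)) as [g4 H4]. destruct (H (true,false,true)) as [g5 H5].
  destruct (H (true,true,false)) as [g6 H6]. destruct (H (true,true,true)) as [g7 H7].
  exists (fun x => match x with
    | (false,false,false) => g0 | (false,false,true) => g1 | (false,true,false) => g2 | (false,true,true) => g3
    | (true,false,false) => g4 | (true,false,true) => g5 | (true,true,false) => g6 | (true,true,true) => g7 end).
  intros [[[|] [|]] [|]]; assumption.
Qed.

Lemma sh_lt g : (sh g < 3)%nat.
Proof. destruct g; simpl; lia. Qed.

Lemma memII th g e : (forall j, (j < 3)%nat -> e / 2 <= N th j) -> e <= 1 ->
  ang_close (act g th) th e -> g = I0.
Proof.
  intros HN He H. destruct (fix_classify g th e H He) as [->|[_ Hg]]; auto.
  specialize (HN (sh g) (sh_lt g)). lra.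
Qed.

Lemma memI th g e b : (b < 3)%nat -> (forall j, (j < 3)%nat -> j <> b -> e / 2 <= N th j) -> e <= 1 ->
  ang_close (act g th) th e -> inK (Some b) g = true.
Proof.
  intros Hb HN He H. destruct (fix_classify g th e H He) as [->|[Hs Hg]]; auto.
  destruct (Nat.eq_dec (sh g) b) as [E|E].
  - subst b. destruct g; simpl in Hs |- *; try discriminate; reflexivity.
  - specialize (HN (sh g) (sh_lt g) E). lra.
Qed.

Lemma comp_I0_l g : comp I0 g = g.
Proof. destruct g; reflexivity. Qed.
Lemma pull_lt g j : (pull g j < 3)%nat.
Proof. unfold pull. apply Nat.mod_upper_bound. lia. Qed.
Lemma ax_lt d : (ax d < 3)%nat.
Proof. destruct d; simpl; lia. Qed.
Lemma flip_comm a d x : flip a (flip d (flip a x)) = flip d x.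
Proof. destruct a, d, x as [[[|] [|]] [|]]; reflexivity. Qed.
Lemma lab_detour a d : dir_eqb a d = false ->
  comp (lab (Some a) a) (comp (lab (Some a) d) (lab (Some a) a)) = lab (Some a) d.
Proof. destruct a, d; simpl; intro H; try discriminate; reflexivity. Qed.

Lemma N_spin th_x th_r hx e j : (j < 3)%nat -> GA th_x hx th_r e -> N th_r (pull hx j) - e <= N th_x j.
Proof. intros Hj H. rewrite <- N_act by exact Hj. pose proof (N_lip _ _ j e (ac_sym _ _ _ H)). lra. Qed.

Lemma ok_of kb d hx hx' L : (L = I0 \/ L = Rd d) -> inK kb (comp (inv (comp L hx)) hx') = true -> ok kb d hx hx' = true.
Proof. intros [-> | ->] H; unfold ok.
  - rewrite comp_I0_l in H. rewrite H. reflexivity.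
  - rewrite H. apply orb_true_r. Qed.

Lemma excl (theta : site -> R) r kappa T : 0 < T -> 3 * T < kappa -> T <= 1/20 ->
  ~ (exists tau : nat, (1 <= tau <= 6)%nat /\ forall r : site, ang_close (theta r) (w_angle tau) kappa) ->
  (forall r', ang_close (theta r') (theta r) T) ->
  (exists a : dir, (forall r' : site, coord a r' = coord a r -> ang_close (theta r') (theta r) T) /\
     (forall r' : site, coord a r' <> coord a r -> ang_close (theta r') (2 * phi a - theta r) T)) -> False.
Proof.
  intros HT0 HTk HT1 Hnot H1 [a [_ H2]].
  assert (Hc : coord a (flip a r) <> coord a r) by (rewrite coord_flip; destruct (coord a r); discriminate).
  pose proof (ac_trans _ _ _ _ _ (ac_sym _ _ _ (H2 _ Hc)) (H1 (flip a r))) as H3.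
  destruct (Rd_phi a (theta r)) as [n Hn].
  assert (H4 : ang_close (act (Rd a) (theta r)) (theta r) (T + T)).
  { eapply ac_eqmodl with (n := (-n)%Z); [|exact H3]. rewrite Hn, opp_IZR. ring. }
  destruct (fix_classify _ _ _ H4 ltac:(lra)) as [E|[_ HN]]. destruct a; discriminate.
  destruct (near_w (theta r) (sh (Rd a)) T (sh_lt _) HT0 ltac:(lra) ltac:(lra)) as [tau [Htau [Hw _]]].
  apply Hnot. exists tau. split; auto. intros r'. eapply ac_mono; [|exact (ac_trans _ _ _ _ _ (H1 r') Hw)]. lra.
Qed.

Lemma concl_alt1 (theta : site -> R) r e T : e <= T ->
  (forall x, GA (theta x) (pat None r x) (theta r) e) -> forall r', ang_close (theta r') (theta r) T.
Proof. intros He H r'. specialize (H r'). unfold GA, pat in H. rewrite act_I0 in H. eapply ac_mono; eauto. Qed.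

Lemma concl_alt2 (theta : site -> R) r a e T : e <= T ->
  (forall x, GA (theta x) (pat (Some a) r x) (theta r) e) ->
  (forall r' : site, coord a r' = coord a r -> ang_close (theta r') (theta r) T) /\
  (forall r' : site, coord a r' <> coord a r -> ang_close (theta r') (2 * phi a - theta r) T).
Proof.
  intros He H. split; intros r' Hc; specialize (H r'); unfold GA, pat in H.
  - rewrite Hc, eqb_reflx, act_I0 in H. eapply ac_mono; eauto.
  - replace (Bool.eqb (coord a r') (coord a r)) with false in H
      by (destruct (coord a r'), (coord a r); simpl; congruence).
    destruct (Rd_phi a (theta r)) as [n Hn].
    eapply ac_mono; [exact He|]. eapply ac_eqmod with (n := n); [|exact H].
    exact Hn.
Qed.

Theorem proposition6p5 :
  exists c0 : R, 0 < c0 /\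
  forall kappa Gamma : R,
    0 < kappa -> 0 < Gamma ->
    kappa <= c0 -> sqrt Gamma <= c0 * kappa ->
    forall theta : site -> R,
      (forall (a : dir) (r : site), coord a r = false ->
         Rabs (Scomp a (theta r) - Scomp a (theta (flip a r))) < Gamma) ->
      ~ (exists tau : nat, (1 <= tau <= 6)%nat /\
           forall r : site, ang_close (theta r) (w_angle tau) kappa) ->
      forall r : site,
        let alt1 := forall r' : site,
            ang_close (theta r') (theta r) (4 * Gamma / kappa) in
        let alt2 := exists a : dir,
            (forall r' : site, coord a r' = coord a r ->
               ang_close (theta r') (theta r) (4 * Gamma / kappa)) /\
            (forall r' : site, coord a r' <> coord a r ->
               ang_close (theta r') (2 * phi a - theta r) (4 * Gamma / kappa)) in
        (alt1 /\ ~ alt2) \/ (~ alt1 /\ alt2).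
Proof.
  exists (1/1000). split; [lra|].
  intros kappa Gamma Hk HG Hkc Hsq theta Hedge Hnot r alt1 alt2.
  set (g := sqrt Gamma) in *.
  assert (HgG : Gamma = g * g) by (unfold g; rewrite sqrt_sqrt; lra).
  assert (Hg0 : 0 < g) by (unfold g; apply sqrt_lt_R0; lra).
  assert (Hgk : g <= kappa / 1000) by lra.
  assert (HC : forall x d, Rabs (cos (theta x - phi d) - cos (theta (flip d x) - phi d)) < g * g).
  { rewrite <- HgG. apply edge_cos. exact Hedge. }
  set (T := 4 * Gamma / kappa) in *.
  assert (HTdef : T * kappa = 4 * (g * g)) by (unfold T; rewrite HgG; field; lra).
  assert (HT0 : 0 < T) by (unfold T; apply Rdiv_lt_0_compat; lra).
  assert (HTk : T <= kappa / 1000) by nra.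
  assert (Hexcl : alt1 -> alt2 -> False).
  { intros H1 H2. eapply (excl theta r kappa T); eauto; lra. }
  assert (Hmain : alt1 \/ alt2).
  2:{ destruct Hmain as [H|H]; [left|right]; split; auto; intro; eapply Hexcl; eauto. }
  pose proof (edge_loose theta g Hg0 ltac:(lra) HC) as HL.
  pose proof (path_any theta r (3/2 * g) ltac:(lra) HL) as HP.
  destruct (site_choice _ HP) as [h Hh].
  assert (Hrel : forall x d, exists L, (L = I0 \/ L = Rd d) /\
     ang_close (act (comp (inv (comp L (h x))) (h (flip d x))) (theta r)) (theta r) (21/2 * g)).
  { intros x d. destruct (HL x d) as [L [HL1 HL2]]. exists L. split; auto. apply uniq_act.
    pose proof (GA_trans _ _ _ _ _ _ _ HL2 (Hh x)) as A. pose proof (Hh (flip d x)) as B.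
    eapply ac_mono; [|exact (ac_trans _ _ _ _ _ (ac_sym _ _ _ B) A)]. lra. }
  assert (Hroot : ang_close (act (h r) (theta r)) (theta r) (21/2 * g)).
  { eapply ac_mono; [|exact (ac_sym _ _ _ (Hh r))]. lra. }
  assert (Hcase : (forall j, (j < 3)%nat -> 8/10 * kappa <= N (theta r) j) \/
                  exists b, (b < 3)%nat /\ N (theta r) b < 8/10 * kappa).
  { destruct (Rlt_dec (N (theta r) 0) (8/10*kappa)) as [H0|H0]. right; exists 0%nat; split; auto; lia.
    destruct (Rlt_dec (N (theta r) 1) (8/10*kappa)) as [H1|H1]. right; exists 1%nat; split; auto; lia.
    destruct (Rlt_dec (N (theta r) 2) (8/10*kappa)) as [H2|H2]. right; exists 2%nat; split; auto; lia.
    left. intros j Hj. destruct j as [|[|[|]]]; try lia; lra. }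
  destruct Hcase as [HII | [b [Hb HNb]]].
  - (* Case II: theta r far from all axes *)
    assert (Hmem : forall gg e, e <= 21/2 * g -> ang_close (act gg (theta r)) (theta r) e -> gg = I0).
    { intros gg e He H. eapply memII; [|  |exact H]. intros j Hj. specialize (HII j Hj). lra. lra. }
    assert (HP2 : exists P, forall x, h x = pat P r x).
    { destruct (disc r None h I) as [Hall | [a [_ Hpa]]].
      + rewrite (Hmem _ _ (Rle_refl _) Hroot). reflexivity.
      + intros x d. destruct (Hrel x d) as [L [HL1 HL2]]. apply (ok_of _ _ _ _ L HL1).
        rewrite (Hmem _ _ (Rle_refl _) HL2). reflexivity.
      + exists None. intros x. apply D3eqb_eq. exact (Hall x).
      + exists (Some a). intros x. apply caseII_eq. exact (Hpa x). }
    destruct HP2 as [P Hhp].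
    assert (HN : forall x j, (j < 3)%nat -> 79/100 * kappa <= N (theta x) j).
    { intros x j Hj. pose proof (N_spin _ _ _ _ j Hj (Hh x)). pose proof (HII _ (pull_lt (h x) j)). lra. }
    set (E := 103/100 * (g * g) / (79/100 * kappa)).
    assert (HEk : E * kappa = 103/79 * (g * g)) by (unfold E; field; lra).
    assert (HE0 : 0 < E) by (unfold E; apply Rdiv_lt_0_compat; nra).
    assert (HE : E <= g) by nra.
    assert (HE3 : 3 * E < T) by nra.
    assert (Hlab : forall y d, GA (theta (flip d y)) (lab P d) (theta y) E).
    { intros y d.
      destruct (edge_tight theta g (79/100*kappa) y d Hg0 ltac:(lra) (HN y (ax d) (ax_lt d)) (HC y d)) as [L [HL1 HL2]].
      fold E in HL2.
      assert (Hc : comp (inv (comp L (h y))) (h (flip d y)) = I0).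
      { apply (Hmem _ (3*(3/2*g) + (E + 3*(3/2*g)))). lra. apply uniq_act.
        exact (ac_trans _ _ _ _ _ (ac_sym _ _ _ (Hh (flip d y))) (GA_trans _ _ _ _ _ _ _ HL2 (Hh y))). }
      rewrite !Hhp in Hc. rewrite <- (caseII_lab P r y d L HL1 Hc). exact HL2. }
    pose proof (path_lab theta r P E HE0 Hlab) as Hpath.
    destruct P as [a|].
    + right. unfold alt2. exists a. apply (concl_alt2 theta r a (3*E) T); [lra|exact Hpath].
    + left. unfold alt1. apply (concl_alt1 theta r (3*E) T); [lra|exact Hpath].
  - (* Case I: theta r close to axis b *)
    assert (Hb1 : N (theta r) b < 1/100) by lra.
    assert (HNo : forall j, (j < 3)%nat -> j <> b -> 84/100 <= N (theta r) j)
      by (intros j Hj Hjb; exact (other_axes _ _ _ Hb Hj Hjb Hb1)).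
    assert (Hmem : forall gg e, e <= 21/2 * g -> ang_close (act gg (theta r)) (theta r) e -> inK (Some b) gg = true).
    { intros gg e He H. eapply memI; [exact Hb| | |exact H]. intros j Hj Hjb. specialize (HNo j Hj Hjb). lra. lra. }
    destruct (disc r (Some b) h Hb) as [Hall | [a [Ha Hpa]]].
    + exact (Hmem _ _ (Rle_refl _) Hroot).
    + intros x d. destruct (Hrel x d) as [L [HL1 HL2]]. apply (ok_of _ _ _ _ L HL1).
      exact (Hmem _ _ (Rle_refl _) HL2).
    + exfalso. destruct (near_w (theta r) b (8/10*kappa) Hb ltac:(lra) ltac:(lra) HNb) as [tau [Htau [Hw1 Hw2]]].
      apply Hnot. exists tau. split; auto. intros x. specialize (Hall x). pose proof (Hh x) as Hx. unfold GA in Hx.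
      simpl in Hall. apply orb_prop in Hall. destruct Hall as [E|E]; apply D3eqb_eq in E; rewrite E in Hx.
      * rewrite act_I0 in Hx. eapply ac_mono; [|exact (ac_trans _ _ _ _ _ Hx Hw1)]. lra.
      * eapply ac_mono; [|exact (ac_trans _ _ _ _ _ Hx Hw2)]. lra.
    + set (E1 := 103/100 * (g * g) / (8/10)).
      assert (HE1d : E1 = 103/80 * (g * g)) by (unfold E1; field).
      assert (HE10 : 0 < E1) by nra.
      assert (HE1 : E1 <= g) by nra.
      assert (HE1T : 9 * E1 < T) by nra.
      assert (Htight : forall x d, tightb b (h x) d = true -> 8/10 <= N (theta x) (ax d)).
      { intros x d Ht. pose proof (N_spin _ _ _ _ (ax d) (ax_lt d) (Hh x)).
        unfold tightb in Ht. apply negb_true_iff, Nat.eqb_neq in Ht.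
        pose proof (HNo _ (pull_lt _ _) Ht). lra. }
      assert (Htl : forall x d, tightb b (h x) d = true -> GA (theta (flip d x)) (lab (Some a) d) (theta x) E1).
      { intros x d Ht.
        destruct (edge_tight theta g (8/10) x d Hg0 ltac:(lra) (Htight x d Ht) (HC x d)) as [L [HL1 HL2]].
        fold E1 in HL2.
        assert (Hkk : inK (Some b) (comp (inv (comp L (h x))) (h (flip d x))) = true).
        { apply (Hmem _ (3*(3/2*g) + (E1 + 3*(3/2*g)))). lra. apply uniq_act.
          exact (ac_trans _ _ _ _ _ (ac_sym _ _ _ (Hh (flip d x))) (GA_trans _ _ _ _ _ _ _ HL2 (Hh x))). }
        rewrite <- (caseI_lab b a r x d L (h x) (h (flip d x)) Hb Ha (Hpa x) Ht (Hpa (flip d x)) HL1 Hkk).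
        exact HL2. }
      assert (Hlab : forall y d, GA (theta (flip d y)) (lab (Some a) d) (theta y) (3 * E1)).
      { intros y d. destruct (tightb b (h y) d) eqn:Ht.
        - eapply GA_mono; [|exact (Htl y d Ht)]. lra.
        - destruct (caseI_detour b a r y d (h y) (h (flip a y)) (h (flip d (flip a y))) Hb Ha (Hpa y) Ht (Hpa _) (Hpa _))
            as [Had [T1 [T2 T3]]].
          pose proof (Htl y a T1) as G1. pose proof (Htl (flip a y) d T2) as G2.
          pose proof (Htl (flip d (flip a y)) a T3) as G3.
          pose proof (GA_trans _ _ _ _ _ _ _ G3 (GA_trans _ _ _ _ _ _ _ G2 G1)) as G.
          rewrite flip_comm, (lab_detour a d Had) in G. eapply GA_mono; [|exact G]. lra. }
      pose proof (path_lab theta r (Some a) (3 * E1) ltac:(lra) Hlab) as Hpath.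
      right. unfold alt2. exists a. apply (concl_alt2 theta r a (3 * (3 * E1)) T); [lra|exact Hpath].
Qed.
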